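(* Let $H_n=\sum_{j=1}^n\frac1j$, let $\gamma$ be the Euler–Mascheroni constant, $\Gamma$ the gamma function, $z^{\overline{k}} = z(z+1) \cdots (z + k -1)$ the rising factorial, and $G$ the Barnes $G$-function. Then: (i) for $k \in \{1, 2,\ldots\}$, $$\sum_{n = 1}^\infty \left(H_n - \log\sqrt[k]{n^{\overline{k}}} - \gamma + \frac{k - 2}{2n} \right) = \frac{\gamma k + 1 -\log (2 \pi )}{2} + \frac{\log G(k+1)}{k};$$ (ii) for $x >0$, $$\sum_{n=1}^\infty \left(H_n - \log(n + x -1) - \gamma + \frac{x}{n} - \frac{3}{2n}\right) = \gamma x + \log\Gamma(x) + \frac{1 - \gamma -\log (2\pi)}{2}.$$
   Context: The Barnes $G$-function is the entire function $G(z+1) = (2\pi)^{z/2} e^{-\frac{z+z^2(1+\gamma)}{2}} \prod_{m=1}^\infty \left(1+\frac{z}{m}\right)^m e^{-z+\frac{z^2}{2m}}$; it satisfies $G(1)=1$ and $G(z+1)=\Gamma(z)G(z)$. *)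

(* Defs.v *)
From Stdlib Require Import Reals.
From Coquelicot Require Import Coquelicot.
Open Scope R_scope.

Fixpoint harmonic (n : nat) : R :=
  match n with
  | O => 0
  | S m => harmonic m + / INR (S m)
  end.

Fixpoint rising (z : R) (k : nat) : R :=
  match k with
  | O => 1
  | S m => rising z m * (z + INR m)
  end.

Definition euler_gamma : R :=
  real (Lim_seq (fun n => harmonic n - ln (INR n))).

(* Gamma function for x > 0, by Euler's limit formula
   Gamma(x) = lim_n n! n^x / (x (x+1) ... (x+n)). *)
Definition Gamma (x : R) : R :=
  real (Lim_seq (fun n => INR (Factorial.fact n) * Rpower (INR n) x / rising x (S n))).

Fixpoint barnes_prod (z : R) (N : nat) : R :=
  match N with
  | O => 1
  | S M => barnes_prod z M *
           ((1 + z / INR (S M)) ^ (S M) * exp (- z + z ^ 2 / (2 * INR (S M))))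
  end.

Definition BarnesG (w : R) : R :=
  let z := w - 1 in
  Rpower (2 * PI) (z / 2) * exp (- (z + z ^ 2 * (1 + euler_gamma)) / 2)
  * real (Lim_seq (barnes_prod z)).

(* Main.v *)
Require Import Defs.
From Stdlib Require Import Reals Lra Lia Psatz FunctionalExtensionality.
From Coquelicot Require Import Coquelicot.
Open Scope R_scope.

Lemma mono0 (f f' : R -> R) u : 0 < u ->
  (forall c, 0 <= c <= u -> is_derive f c (f' c)) ->
  (forall c, 0 < c < u -> 0 <= f' c) -> f 0 <= f u.
Proof.
intros Hu Hd Hp.
destruct (MVT_cor2 f f' 0 u Hu) as [c [Hc1 Hc2]].
{ intros c Hc. apply is_derive_Reals. now apply Hd. }
assert (0 <= f' c * (u - 0)) by (apply Rmult_le_pos; [apply Hp; lra| lra]). lra.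
Qed.

Lemma mono0' (f f' : R -> R) u : 0 <= u ->
  (forall c, 0 <= c <= u -> is_derive f c (f' c)) ->
  (forall c, 0 < c < u -> 0 <= f' c) -> f 0 <= f u.
Proof.
intros Hu Hd Hp. destruct (Req_dec u 0) as [->|]. lra. apply mono0 with f'; auto; lra.
Qed.

Lemma L1 u : 0 <= u -> ln (1 + u) <= u.
Proof.
intros Hu.
assert (H : (fun u => u - ln (1 + u)) 0 <= (fun u => u - ln (1 + u)) u).
{ apply (mono0' (fun u => u - ln (1 + u)) (fun c => 1 - / (1 + c)) u Hu).
- intros c Hc. auto_derive. lra. field. lra.
- intros c Hc. assert (/ (1 + c) <= 1). { rewrite <- Rinv_1. apply Rinv_le_contravar; lra. } lra. }
simpl in H. rewrite Rplus_0_r, ln_1 in H. lra.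
Qed.

Lemma L2 u : 0 <= u -> u - u^2/2 <= ln (1 + u).
Proof.
intros Hu.
assert (H : (fun u => ln (1 + u) - u + u^2/2) 0 <= (fun u => ln (1 + u) - u + u^2/2) u).
{ apply (mono0' (fun u => ln (1 + u) - u + u^2/2) (fun c => c^2 / (1 + c)) u Hu).
- intros c Hc. auto_derive. lra. field. lra.
- intros c Hc. apply Rdiv_le_0_compat; nra. }
simpl in H. rewrite Rplus_0_r, ln_1 in H. lra.
Qed.

Lemma L3 u : 0 <= u -> ln (1 + u) <= u - u^2/2 + u^3/3.
Proof.
intros Hu.
assert (H : (fun u => u - u^2/2 + u^3/3 - ln (1 + u)) 0 <= (fun u => u - u^2/2 + u^3/3 - ln (1 + u)) u).
{ apply (mono0' (fun u => u - u^2/2 + u^3/3 - ln (1 + u)) (fun c => c^3 / (1 + c)) u Hu).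
- intros c Hc. auto_derive. lra. field. lra.
- intros c Hc. apply Rdiv_le_0_compat; nra. }
simpl in H. rewrite Rplus_0_r, ln_1 in H. lra.
Qed.

Lemma L4 u : 0 <= u -> 2 * u / (2 + u) <= ln (1 + u).
Proof.
intros Hu.
assert (H : (fun u => ln (1 + u) - 2 * u / (2 + u)) 0 <= (fun u => ln (1 + u) - 2 * u / (2 + u)) u).
{ apply (mono0' (fun u => ln (1 + u) - 2 * u / (2 + u)) (fun c => c^2 / ((1 + c) * (2 + c)^2)) u Hu).
- intros c Hc. auto_derive. lra. field. lra.
- intros c Hc. apply Rdiv_le_0_compat. nra. apply Rmult_lt_0_compat; nra. }
simpl in H. rewrite Rplus_0_r, ln_1 in H. replace (2 * 0 / (2 + 0)) with 0 in H by field. lra.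
Qed.

Lemma cont_of_derive (f : R -> R) (x l : R) : is_derive f x l -> continuity_pt f x.
Proof.
intros H. apply continuity_pt_filterlim. apply (@ex_derive_continuous R_AbsRing R_NormedModule). exists l. exact H.
Qed.

Lemma lim_inv_n : is_lim_seq (fun n => / INR n) 0.
Proof.
replace (Finite 0) with (Rbar_inv p_infty) by reflexivity.
apply is_lim_seq_inv. apply is_lim_seq_INR. discriminate.
Qed.

Lemma lim_inv_nb b : is_lim_seq (fun n => / (INR n + b)) 0.
Proof.
replace (Finite 0) with (Rbar_inv p_infty) by reflexivity.
apply is_lim_seq_inv. 2: discriminate.
apply is_lim_seq_plus with p_infty b. apply is_lim_seq_INR. apply is_lim_seq_const. reflexivity.
Qed.

Lemma INR_pos_ev b : eventually (fun n => 0 < INR n + b).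
Proof.
destruct (INR_unbounded (Rabs b)) as [N HN]. exists N. intros n Hn.
apply le_INR in Hn. assert (- b <= Rabs b) by (rewrite <- Rabs_Ropp; apply Rle_abs). lra.
Qed.

Lemma lim_ratio a b : is_lim_seq (fun n => (INR n + a) / (INR n + b)) 1.
Proof.
apply is_lim_seq_ext_loc with (fun n => 1 + (a - b) * / (INR n + b)).
- destruct (INR_pos_ev b) as [N HN]. exists N. intros n Hn. specialize (HN n Hn). field. lra.
- replace (Finite 1) with (Finite (1 + (a - b) * 0)) by (f_equal; ring).
  apply is_lim_seq_plus'. apply is_lim_seq_const. apply is_lim_seq_mult'. apply is_lim_seq_const.
  apply lim_inv_nb.
Qed.

Lemma incr_le (a : nat -> R) n0 : (forall n, (n0 <= n)%nat -> a n <= a (S n)) ->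
  forall n m, (n0 <= n)%nat -> (n <= m)%nat -> a n <= a m.
Proof.
intros H n m Hn Hm. induction Hm. lra. specialize (H m ltac:(lia)). lra.
Qed.

Lemma decr_le (a : nat -> R) n0 : (forall n, (n0 <= n)%nat -> a (S n) <= a n) ->
  forall n m, (n0 <= n)%nat -> (n <= m)%nat -> a m <= a n.
Proof.
intros H n m Hn Hm. induction Hm. lra. specialize (H m ltac:(lia)). lra.
Qed.

Lemma incr_lim_le (a : nat -> R) n0 (l : R) : (forall n, (n0 <= n)%nat -> a n <= a (S n)) ->
  is_lim_seq a l -> forall n, (n0 <= n)%nat -> a n <= l.
Proof.
intros H Hl n Hn.
assert (Rbar_le (a n) l).
{ apply is_lim_seq_le_loc with (fun _ => a n) a. exists n. intros m Hm.
  apply incr_le with n0; auto. apply is_lim_seq_const. exact Hl. }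
exact H0.
Qed.

Lemma decr_lim_ge (a : nat -> R) n0 (l : R) : (forall n, (n0 <= n)%nat -> a (S n) <= a n) ->
  is_lim_seq a l -> forall n, (n0 <= n)%nat -> l <= a n.
Proof.
intros H Hl n Hn.
assert (- a n <= - l).
{ apply (incr_lim_le (fun n => - a n) n0); auto.
  intros m Hm. specialize (H m Hm). lra.
  replace (Finite (- l)) with (Rbar_opp l) by reflexivity. exact (proj1 (is_lim_seq_opp a l) Hl). }
lra.
Qed.

Lemma abs_bt x y : Rabs x <= y -> - y <= x <= y.
Proof. apply Rabs_le_between. Qed.

Lemma conv_bound (a : nat -> R) c n0 : (1 <= n0)%nat -> 0 <= c ->
  (forall n, (n0 <= n)%nat -> Rabs (a (S n) - a n) <= c * (/ INR n - / INR (S n))) ->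
  ex_finite_lim_seq a.
Proof.
intros Hn0 Hc H.
assert (Hpos : forall n, 0 < INR (n + n0)).
{ intros n. apply lt_0_INR. lia. }
set (b := fun n => a (n + n0)%nat + c / INR (n + n0)).
set (d := fun n => a (n + n0)%nat - c / INR (n + n0)).
assert (Hb : forall n, b (S n) <= b n).
{ intros n. unfold b. specialize (H (n + n0)%nat ltac:(lia)). rewrite Nat.add_succ_l.
  apply abs_bt in H. rewrite Rmult_minus_distr_l in H. unfold Rdiv. lra. }
assert (Hd : forall n, d n <= d (S n)).
{ intros n. unfold d. specialize (H (n + n0)%nat ltac:(lia)). rewrite Nat.add_succ_l.
  apply abs_bt in H. rewrite Rmult_minus_distr_l in H. unfold Rdiv. lra. }
assert (Hbd : forall n, d 0%nat <= b n).
{ intros n. apply Rle_trans with (d n). apply (incr_le d 0); auto; lia.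
  unfold b, d. specialize (Hpos n). assert (0 <= c / INR (n + n0)) by (apply Rdiv_le_0_compat; lra). lra. }
destruct (ex_finite_lim_seq_decr b (d 0%nat) Hb Hbd) as [l Hl].
exists l. apply (is_lim_seq_incr_n a n0).
apply is_lim_seq_ext with (fun n => b n - c * / INR (n + n0)).
{ intros n. unfold b. unfold Rdiv. ring. }
replace (Finite l) with (Finite (l - c * 0)) by (f_equal; ring).
apply is_lim_seq_minus'. exact Hl. apply is_lim_seq_mult'. apply is_lim_seq_const.
apply (is_lim_seq_incr_n (fun n => / INR n) n0). apply lim_inv_n.
Qed.

Lemma ln_1_plus_div n c : 0 < n -> 0 <= c -> ln (n + c) - ln n = ln (1 + c / n).
Proof.
intros Hn Hc. replace (n + c) with (n * (1 + c / n)) by (field; lra).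
rewrite ln_mult. ring. lra. apply Rplus_lt_le_0_compat. lra. apply Rdiv_le_0_compat; lra.
Qed.

Lemma ln_shift c : 0 <= c -> is_lim_seq (fun n => ln (INR n + c) - ln (INR n)) 0.
Proof.
intros Hc.
apply is_lim_seq_le_le_loc with (fun _ => 0) (fun n => c * / INR n).
- exists 1%nat. intros n Hn. assert (0 < INR n) by (apply lt_0_INR; lia).
  rewrite ln_1_plus_div; auto. split.
  + rewrite <- ln_1. apply ln_le. lra. assert (0 <= c / INR n) by (apply Rdiv_le_0_compat; lra). lra.
  + apply L1. apply Rdiv_le_0_compat; lra.
- apply is_lim_seq_const.
- replace (Finite 0) with (Finite (c * 0)) by (f_equal; ring).
  apply is_lim_seq_mult'. apply is_lim_seq_const. apply lim_inv_n.
Qed.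

Lemma N_ln c : 0 <= c -> is_lim_seq (fun n => INR n * (ln (INR n + c + 1) - ln (INR n + c))) 1.
Proof.
intros Hc.
apply is_lim_seq_le_le_loc with (fun n => INR n / (INR n + c) - (INR n / (INR n + c)) * (/ (INR n + c)) / 2)
  (fun n => INR n / (INR n + c)).
- exists 1%nat. intros n Hn. assert (0 < INR n) by (apply lt_0_INR; lia).
  rewrite ln_1_plus_div by lra.
  assert (Hu : 0 <= 1 / (INR n + c)) by (apply Rdiv_le_0_compat; lra).
  pose proof (L1 _ Hu). pose proof (L2 _ Hu). split.
  + replace (INR n / (INR n + c) - INR n / (INR n + c) * / (INR n + c) / 2) with
      (INR n * (1 / (INR n + c) - (1 / (INR n + c))^2/2)) by (field; lra).
    apply Rmult_le_compat_l; lra.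
  + replace (INR n / (INR n + c)) with (INR n * (1 / (INR n + c))) by (field; lra).
    apply Rmult_le_compat_l; lra.
- replace (Finite 1) with (Finite (1 - 1 * 0 / 2)) by (f_equal; field).
  apply is_lim_seq_minus'.
  + replace (fun n => INR n / (INR n + c)) with (fun n => (INR n + 0) / (INR n + c)).
    apply lim_ratio. apply functional_extensionality. intros; f_equal; ring.
  + apply is_lim_seq_mult'. apply is_lim_seq_mult'.
    replace (fun n => INR n / (INR n + c)) with (fun n => (INR n + 0) / (INR n + c)).
    apply lim_ratio. apply functional_extensionality. intros; f_equal; ring.
    apply lim_inv_nb. apply is_lim_seq_const.
- replace (fun n => INR n / (INR n + c)) with (fun n => (INR n + 0) / (INR n + c)).
  apply lim_ratio. apply functional_extensionality. intros; f_equal; ring.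
Qed.

Definition hh n := harmonic n - ln (INR n).

Lemma hh_step n : (1 <= n)%nat -> hh n - hh (S n) = ln (1 + 1 / INR n) - / INR (S n).
Proof.
intros Hn. assert (0 < INR n) by (apply lt_0_INR; lia).
unfold hh. change (harmonic (S n)) with (harmonic n + / INR (S n)). rewrite <- ln_1_plus_div by lra. rewrite S_INR. ring.
Qed.

Lemma hA n : (2 <= n)%nat -> hh n - / (2 * INR n) <= hh (S n) - / (2 * INR (S n)).
Proof.
intros Hn. assert (Hx : 2 <= INR n) by (apply (le_INR 2); lia).
pose proof (hh_step n ltac:(lia)).
assert (Hu : 0 <= 1 / INR n) by (apply Rdiv_le_0_compat; lra).
pose proof (L3 _ Hu). rewrite S_INR in *.
set (x := INR n) in *.
assert (E : / (2 * x) - / (2 * (x + 1)) - (1 / x - (1/x)^2/2 + (1/x)^3/3 - / (x + 1))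
   = (x - 2) / (6 * x^3 * (x + 1))) by (field; lra).
assert (0 <= (x - 2) / (6 * x^3 * (x + 1))) by (apply Rdiv_le_0_compat; [lra | apply Rmult_lt_0_compat; [|lra]; apply Rmult_lt_0_compat; [lra| apply pow_lt; lra]]).
lra.
Qed.

Lemma hB n : (2 <= n)%nat -> hh (S n) - / (2 * INR (S (S n))) <= hh n - / (2 * INR (S n)).
Proof.
intros Hn. assert (Hx : 2 <= INR n) by (apply (le_INR 2); lia).
pose proof (hh_step n ltac:(lia)).
assert (Hu : 0 <= 1 / INR n) by (apply Rdiv_le_0_compat; lra).
pose proof (L2 _ Hu). rewrite !S_INR in *.
set (x := INR n) in *.
assert (E : (1 / x - (1/x)^2/2 - / (x + 1)) - (/ (2 * (x + 1)) - / (2 * (x + 1 + 1)))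
   = (x - 2) / (2 * x^2 * (x + 1) * (x + 2))) by (field; lra).
assert (0 <= (x - 2) / (2 * x^2 * (x + 1) * (x + 2))).
{ apply Rdiv_le_0_compat. lra. apply Rmult_lt_0_compat; [|lra]. apply Rmult_lt_0_compat; [|lra]. apply Rmult_lt_0_compat; [lra| apply pow_lt; lra]. }
lra.
Qed.

Lemma hh_lim : is_lim_seq hh euler_gamma /\
  forall n, (2 <= n)%nat -> hh n - / (2 * INR n) <= euler_gamma <= hh n - / (2 * INR (S n)).
Proof.
set (A := fun n => hh n - / (2 * INR n)).
set (B := fun n => hh n - / (2 * INR (S n))).
assert (HA : forall n, (2 <= n)%nat -> A n <= A (S n)) by (intros; apply hA; auto).
assert (HB : forall n, (2 <= n)%nat -> B (S n) <= B n) by (intros; apply hB; auto).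
assert (HAB : forall n, (1 <= n)%nat -> A n <= B n).
{ intros n Hn. unfold A, B. assert (0 < INR n) by (apply lt_0_INR; lia). rewrite S_INR.
  assert (/ (2 * (INR n + 1)) <= / (2 * INR n)) by (apply Rinv_le_contravar; lra). lra. }
destruct (ex_finite_lim_seq_incr (fun n => A (n + 2)%nat) (B 2%nat)) as [l Hl].
{ intros n. apply HA. lia. }
{ intros n. apply Rle_trans with (B (n + 2)%nat). apply HAB; lia.
  apply (decr_le B 2); auto; lia. }
apply is_lim_seq_incr_n in Hl.
assert (Hh : is_lim_seq hh l).
{ apply is_lim_seq_ext_loc with (fun n => A n + / 2 * / INR n).
  exists 1%nat. intros n Hn. assert (0 < INR n) by (apply lt_0_INR; lia). unfold A. field. lra.
  replace (Finite l) with (Finite (l + /2 * 0)) by (f_equal; ring).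
  apply is_lim_seq_plus'. auto. apply is_lim_seq_mult'. apply is_lim_seq_const. apply lim_inv_n. }
assert (Eg : euler_gamma = l).
{ unfold euler_gamma. fold hh. rewrite (is_lim_seq_unique _ _ Hh). reflexivity. }
assert (HBl : is_lim_seq B l).
{ apply is_lim_seq_ext with (fun n => hh n - / 2 * / (INR n + 1)).
  intros n. unfold B. rewrite S_INR. rewrite Rinv_mult. ring.
  replace (Finite l) with (Finite (l - /2 * 0)) by (f_equal; ring).
  apply is_lim_seq_minus'. auto. apply is_lim_seq_mult'. apply is_lim_seq_const. apply lim_inv_nb. }
rewrite Eg. split. exact Hh.
intros n Hn. split.
- apply (incr_lim_le A 2); auto.
- apply (decr_lim_ge B 2); auto.
Qed.

Lemma hh_rate a : is_lim_seq (fun n => (INR n + a) * (hh n - euler_gamma)) (/ 2).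
Proof.
destruct hh_lim as [_ Hb].
apply is_lim_seq_le_le_loc with (fun n => (INR n + a) / (INR n + 1) * / 2)
   (fun n => (INR n + a) / (INR n + 0) * / 2).
- destruct (INR_pos_ev a) as [N HN]. exists (N + 2)%nat. intros n Hn.
  specialize (HN n ltac:(lia)). specialize (Hb n ltac:(lia)).
  assert (0 < INR n) by (apply lt_0_INR; lia). rewrite S_INR in Hb. split.
  + replace ((INR n + a) / (INR n + 1) * / 2) with ((INR n + a) * / (2 * (INR n + 1))) by (field; lra).
    apply Rmult_le_compat_l; lra.
  + replace ((INR n + a) / (INR n + 0) * / 2) with ((INR n + a) * / (2 * INR n)) by (field; lra).
    apply Rmult_le_compat_l; lra.
- replace (Finite (/2)) with (Finite (1 * /2)) by (f_equal; ring).
  apply is_lim_seq_mult'. apply lim_ratio. apply is_lim_seq_const.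
- replace (Finite (/2)) with (Finite (1 * /2)) by (f_equal; ring).
  apply is_lim_seq_mult'. apply lim_ratio. apply is_lim_seq_const.
Qed.

Fixpoint lf (n : nat) : R := match n with O => 0 | S m => lf m + ln (INR (S m)) end.

Lemma lf_S n : lf (S n) = lf n + ln (INR (S n)).
Proof. reflexivity. Qed.

Definition Cs n := lf n - (INR n + /2) * ln (INR n) + INR n.

Lemma Cs_step n : (1 <= n)%nat -> Cs n - Cs (S n) = (INR n + /2) * ln (1 + 1 / INR n) - 1.
Proof.
intros Hn. assert (0 < INR n) by (apply lt_0_INR; lia).
rewrite <- ln_1_plus_div by lra. unfold Cs. rewrite lf_S. rewrite S_INR. ring.
Qed.

Lemma Cs_bound n : (1 <= n)%nat -> Rabs (Cs (S n) - Cs n) <= / 2 * (/ INR n - / INR (S n)).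
Proof.
intros Hn. assert (Hx : 1 <= INR n) by (apply (le_INR 1); lia).
pose proof (Cs_step n Hn) as E.
assert (Hu : 0 <= 1 / INR n) by (apply Rdiv_le_0_compat; lra).
pose proof (L3 _ Hu) as H3. pose proof (L4 _ Hu) as H4. rewrite S_INR.
set (x := INR n) in *. set (L := ln (1 + 1 / x)) in *.
assert (Hlow : 1 <= (x + /2) * L).
{ replace 1 with ((x + /2) * (2 * (1 / x) / (2 + 1 / x))) by (field; lra).
  apply Rmult_le_compat_l; lra. }
assert (Hup : (x + /2) * L <= (x + /2) * (1 / x - (1 / x)^2/2 + (1/x)^3/3)).
{ apply Rmult_le_compat_l; lra. }
assert (E2 : / 2 * (/ x - / (x + 1)) - ((x + /2) * (1 / x - (1 / x)^2/2 + (1/x)^3/3) - 1)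
   = (5 * x + 2) * (x - 1) / (12 * x^3 * (x + 1))) by (field; lra).
assert (0 <= (5 * x + 2) * (x - 1) / (12 * x^3 * (x + 1))).
{ apply Rdiv_le_0_compat. nra. apply Rmult_lt_0_compat; [|lra]. apply Rmult_lt_0_compat; [lra| apply pow_lt; lra]. }
rewrite Rabs_left1 by lra. lra.
Qed.

Lemma Cs_conv : ex_finite_lim_seq Cs.
Proof.
apply (conv_bound Cs (/2) 1). lia. lra. intros n Hn. apply Cs_bound; auto.
Qed.

Definition Iw n := RInt (fun t => sin t ^ n) 0 (PI / 2).

Lemma sinpow_cont n t : continuous (fun t => sin t ^ n) t.
Proof. apply (@ex_derive_continuous R_AbsRing R_NormedModule). auto_derive. auto. Qed.

Lemma Iw_ex n : ex_RInt (fun t => sin t ^ n) 0 (PI / 2).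
Proof. apply (@ex_RInt_continuous R_CompleteNormedModule). intros. apply sinpow_cont. Qed.

Lemma Iw_rec n : INR (S (S n)) * Iw (S (S n)) = INR (S n) * Iw n.
Proof.
set (df := fun t => INR (S n) * sin t ^ n - INR (S (S n)) * sin t ^ (S (S n))).
set (F := fun t => sin t ^ (S n) * cos t).
assert (H1 : is_RInt df 0 (PI/2) (minus (F (PI/2)) (F 0))).
{ apply (@is_RInt_derive R_CompleteNormedModule F df).
  - intros t _. unfold df, F. auto_derive. auto.
    change (match n with 0%nat => 1 | S _ => INR n + 1 end) with (INR (S n)).
    rewrite !S_INR.
    pose proof (sin2_cos2 t) as Hsc. unfold Rsqr in Hsc.
    transitivity ((INR n + 1) * sin t ^ n * (cos t * cos t) - sin t ^ S (S n)). simpl; ring.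
    replace (cos t * cos t) with (1 - sin t * sin t) by lra. simpl; ring.
  - intros t _. unfold df. apply (@ex_derive_continuous R_AbsRing R_NormedModule). auto_derive. auto. }
assert (E0 : minus (F (PI/2)) (F 0) = 0).
{ unfold F. rewrite cos_PI2, sin_0. simpl. unfold minus, plus, opp; simpl. ring. }
rewrite E0 in H1.
assert (H2 : is_RInt df 0 (PI/2) (INR (S n) * Iw n - INR (S (S n)) * Iw (S (S n)))).
{ apply (is_RInt_ext (fun t => minus (scal (INR (S n)) (sin t ^ n)) (scal (INR (S (S n))) (sin t ^ (S (S n)))))).
  intros. reflexivity.
  apply (@is_RInt_minus R_NormedModule); apply (@is_RInt_scal R_NormedModule); apply (@RInt_correct R_CompleteNormedModule); apply Iw_ex. }
apply (@is_RInt_unique R_CompleteNormedModule) in H1. apply (@is_RInt_unique R_CompleteNormedModule) in H2. rewrite H1 in H2. lra.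
Qed.

Lemma Iw0 : Iw 0 = PI / 2.
Proof.
unfold Iw. simpl. rewrite (@RInt_const R_CompleteNormedModule). unfold scal; simpl. unfold mult; simpl. ring.
Qed.

Lemma Iw1 : Iw 1 = 1.
Proof.
unfold Iw. apply (@is_RInt_unique R_CompleteNormedModule).
replace 1 with (minus ((fun t => - cos t) (PI/2)) ((fun t => - cos t) 0)).
2:{ rewrite cos_PI2, cos_0. unfold minus, plus, opp; simpl. ring. }
apply (@is_RInt_derive R_CompleteNormedModule (fun t => - cos t) (fun t => sin t ^ 1)).
- intros t _. auto_derive. auto. ring.
- intros t _. apply sinpow_cont.
Qed.

Lemma sin_01 t : 0 <= t <= PI / 2 -> 0 <= sin t <= 1.
Proof.
intros Ht. split. apply sin_ge_0; pose proof PI_RGT_0; lra.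
pose proof (SIN_bound t). lra.
Qed.

Lemma Iw_nonneg n : 0 <= Iw n.
Proof.
apply RInt_ge_0. pose proof PI_RGT_0; lra. apply Iw_ex.
intros t Ht. apply pow_le. apply sin_01; lra.
Qed.

Lemma Iw_decr n : Iw (S n) <= Iw n.
Proof.
apply RInt_le. pose proof PI_RGT_0; lra. apply Iw_ex. apply Iw_ex.
intros t Ht. destruct (sin_01 t ltac:(lra)). simpl.
assert (0 <= sin t ^ n) by (apply pow_le; lra). nra.
Qed.

Lemma Iw_prod n : INR (S n) * Iw (S n) * Iw n = PI / 2.
Proof.
induction n.
- rewrite Iw1, Iw0. simpl. ring.
- rewrite Iw_rec. rewrite <- IHn. ring.
Qed.

Lemma Iw_pos n : 0 < Iw n.
Proof.
pose proof (Iw_prod n). pose proof (Iw_nonneg n). pose proof (Iw_nonneg (S n)).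
pose proof PI_RGT_0. destruct H0 as [H0|H0]; auto.
rewrite <- H0 in H. lra.
Qed.

Lemma INR2 : INR 2 = 2.
Proof. simpl. ring. Qed.

Lemma Iw_odd m : ln (Iw (2*m+1)) = INR (2*m) * ln 2 + 2 * lf m - lf (2*m+1).
Proof.
induction m.
- simpl. rewrite Iw1, ln_1. ring.
- replace (2 * S m + 1)%nat with (S (S (2*m+1))) by lia.
  set (k := (2 * m + 1)%nat) in *.
  assert (Hk : 0 < INR (S k)) by (apply lt_0_INR; lia).
  assert (Hk2 : 0 < INR (S (S k))) by (apply lt_0_INR; lia).
  assert (E : Iw (S (S k)) = INR (S k) * / INR (S (S k)) * Iw k).
  { apply Rmult_eq_reg_l with (INR (S (S k))). rewrite Iw_rec. field. lra. lra. }
  rewrite E. rewrite !ln_mult; try apply Rmult_lt_0_compat; try apply Rinv_0_lt_compat; auto using Iw_pos.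
  rewrite ln_Rinv by auto. rewrite IHm. rewrite !lf_S.
  assert (E2 : INR (S k) = 2 * INR (S m)) by (unfold k; rewrite (S_INR (2*m+1)), plus_INR, mult_INR, INR2, INR_1, S_INR; ring).
  assert (E3 : INR (2 * S m) = INR (2 * m) + 2) by (rewrite !mult_INR, INR2, S_INR; ring).
  rewrite E3. rewrite E2. rewrite ln_mult by (try lra; apply lt_0_INR; lia). ring.
Qed.

Lemma wallis_lim : is_lim_seq (fun m => INR (2*m+1) * Iw (2*m+1) ^ 2) (PI / 2).
Proof.
pose proof PI_RGT_0 as Hpi.
apply is_lim_seq_le_le with (fun m => (INR m + /2) / (INR m + 1) * (PI / 2)) (fun _ => PI / 2).
- intros m.
  assert (H0 : INR (S (2*m)) * Iw (S (2*m)) * Iw (2*m) = PI / 2) by apply Iw_prod.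
  assert (H1 : INR (S (S (2*m))) * Iw (S (S (2*m))) * Iw (S (2*m)) = PI / 2) by apply Iw_prod.
  replace (S (2*m)) with (2*m+1)%nat in H0, H1 by lia.
  pose proof (Iw_decr (2*m)) as D0. pose proof (Iw_decr (S (2*m))) as D1.
  replace (S (2*m)) with (2*m+1)%nat in D0, D1 by lia.
  pose proof (Iw_pos (2*m+1)) as P1. pose proof (Iw_pos (S (2*m+1))) as P2.
  assert (E1 : INR (2*m+1) = 2 * INR m + 1) by (rewrite plus_INR, mult_INR, INR2, INR_1; ring).
  assert (E2 : INR (S (2*m+1)) = 2 * INR m + 2) by (rewrite S_INR, E1; ring).
  rewrite E1 in *. rewrite E2 in *.
  assert (0 <= INR m) by apply pos_INR.
  set (a := Iw (2*m+1)) in *. set (b := Iw (S (2*m+1))) in *. set (c := Iw (2*m)) in *.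
  split.
  + replace ((INR m + / 2) / (INR m + 1) * (PI / 2)) with ((2 * INR m + 1) * b * a) by (rewrite <- H1; field; lra).
    assert (b * a <= a * a) by nra. simpl. nra.
  + rewrite <- H0. assert (a * a <= a * c) by nra. simpl. nra.
- replace (Finite (PI/2)) with (Finite (1 * (PI/2))) by (f_equal; ring).
  apply is_lim_seq_mult'. apply lim_ratio. apply is_lim_seq_const.
- apply is_lim_seq_const.
Qed.

Lemma Cs_lim : is_lim_seq Cs (ln (2 * PI) / 2).
Proof.
pose proof PI_RGT_0 as Hpi.
destruct Cs_conv as [Cl HC].
assert (H1 : is_lim_seq (fun m => ln (INR (2*m+1) * Iw (2*m+1) ^ 2)) (ln (PI / 2))).
{ apply is_lim_seq_continuous. apply cont_of_derive with (/ (PI/2)). auto_derive. lra. field. lra.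
  apply wallis_lim. }
assert (Hsub : filterlim (fun m => (2 * m)%nat) eventually eventually).
{ apply eventually_subseq. intros; lia. }
assert (H2 : is_lim_seq (fun m => 4 * Cs m - 2 * Cs (2*m)%nat - 2 * ln 2 - (ln (INR (2*m) + 1) - ln (INR (2*m))))
          (4 * Cl - 2 * Cl - 2 * ln 2 - 0)).
{ apply is_lim_seq_minus'. apply is_lim_seq_minus'. apply is_lim_seq_minus'.
  apply is_lim_seq_mult'. apply is_lim_seq_const. auto.
  apply is_lim_seq_mult'. apply is_lim_seq_const. apply (is_lim_seq_subseq Cs Cl _ Hsub HC).
  apply is_lim_seq_const.
  apply (is_lim_seq_subseq (fun n => ln (INR n + 1) - ln (INR n)) 0 _ Hsub). apply ln_shift. lra. }
assert (H3 : is_lim_seq (fun m => 4 * Cs m - 2 * Cs (2*m)%nat - 2 * ln 2 - (ln (INR (2*m) + 1) - ln (INR (2*m))))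
          (ln (PI / 2))).
{ apply is_lim_seq_ext_loc with (2 := H1). exists 1%nat. intros m Hm.
  assert (Hy : 0 < INR m) by (apply lt_0_INR; lia).
  pose proof (Iw_pos (2*m+1)) as P.
  rewrite ln_mult by (try apply pow_lt; auto; apply lt_0_INR; lia).
  rewrite ln_pow by auto. rewrite Iw_odd.
  replace (2*m+1)%nat with (S (2*m)) by lia. rewrite lf_S. unfold Cs.
  rewrite (S_INR (2*m)), !mult_INR, INR2.
  rewrite (ln_mult 2 (INR m)) by lra. field. }
apply is_lim_seq_unique in H2. apply is_lim_seq_unique in H3. rewrite H2 in H3.
apply (f_equal real) in H3. simpl in H3.

rewrite (ln_div PI 2) in H3 by lra. rewrite (ln_mult 2 PI) by lra.
assert (EQC : Cl = (ln 2 + ln PI) / 2) by lra. rewrite <- EQC. exact HC.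
Qed.

Fixpoint sk (f : nat -> R) (k : nat) : R := match k with O => 0 | S j => sk f j + f j end.

Lemma sk_S f k : sk f (S k) = sk f k + f k.
Proof. reflexivity. Qed.

Definition gl x N := lf N + x * ln (INR N) - sk (fun j => ln (x + INR j)) (S N).

Lemma fact_exp n : INR (Factorial.fact n) = exp (lf n).
Proof.
induction n. simpl. rewrite exp_0. reflexivity.
change (Factorial.fact (S n)) with (S n * Factorial.fact n)%nat. rewrite mult_INR, IHn, lf_S, exp_plus, exp_ln.
ring. apply lt_0_INR; lia.
Qed.

Lemma rising_exp x n : 0 < x -> rising x n = exp (sk (fun j => ln (x + INR j)) n).
Proof.
intros Hx. induction n. simpl. rewrite exp_0. reflexivity.
simpl rising. rewrite IHn, sk_S, exp_plus, exp_ln. reflexivity.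
pose proof (pos_INR n). lra.
Qed.

Lemma GammaN_exp x N : 0 < x ->
  INR (Factorial.fact N) * Rpower (INR N) x / rising x (S N) = exp (gl x N).
Proof.
intros Hx. rewrite fact_exp, rising_exp by auto. unfold Rpower, gl, Rdiv, Rminus.
rewrite !exp_plus, exp_Ropp. ring.
Qed.

Lemma gl_bound x N : 0 < x -> (1 <= N)%nat ->
  Rabs (gl x (S N) - gl x N) <= (x + x^2) * (/ INR N - / INR (S N)).
Proof.
intros Hx HN. assert (Hy : 1 <= INR N) by (apply (le_INR 1); lia).
assert (E : gl x (S N) - gl x N = x * ln (1 + 1 / INR N) - ln (1 + x / (INR N + 1))).
{ unfold gl. rewrite lf_S, (sk_S _ (S N)).
  rewrite <- ln_1_plus_div by lra. rewrite <- ln_1_plus_div by lra.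
  rewrite !S_INR. replace (x + (INR N + 1)) with (INR N + 1 + x) by ring. ring. }
rewrite E. rewrite S_INR.
assert (Hu : 0 <= 1 / INR N) by (apply Rdiv_le_0_compat; lra).
assert (Hv : 0 <= x / (INR N + 1)) by (apply Rdiv_le_0_compat; lra).
pose proof (L1 _ Hu). pose proof (L2 _ Hu). pose proof (L1 _ Hv). pose proof (L2 _ Hv).
set (y := INR N) in *.
set (a := ln (1 + 1 / y)) in *. set (b := ln (1 + x / (y + 1))) in *.
assert (Xa1 : x * a <= x * (1 / y)) by (apply Rmult_le_compat_l; lra).
assert (Xa2 : x * (1 / y - (1 / y)^2/2) <= x * a) by (apply Rmult_le_compat_l; lra).
assert (U : (x + x^2) * (/ y - / (y + 1)) - (x * (1 / y) - (x / (y + 1) - (x / (y + 1))^2/2))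
   = x^2 * (y + 2) / (2 * y * (y + 1)^2)) by (field; lra).
assert (U0 : 0 <= x^2 * (y + 2) / (2 * y * (y + 1)^2)).
{ apply Rdiv_le_0_compat. apply Rmult_le_pos; nra. apply Rmult_lt_0_compat; [lra| apply pow_lt; lra]. }
assert (Lw : x * (1 / y - (1 / y)^2/2) - x / (y + 1) + (x + x^2) * (/ y - / (y + 1))
   = x * (3 * y - 1) / (2 * y^2 * (y + 1)) + x^2 / (y * (y + 1))) by (field; lra).
assert (L0 : 0 <= x * (3 * y - 1) / (2 * y^2 * (y + 1)) + x^2 / (y * (y + 1))).
{ apply Rplus_le_le_0_compat; apply Rdiv_le_0_compat; try nra; repeat apply Rmult_lt_0_compat; try lra; apply pow_lt; lra. }
apply Rabs_le_between. split; lra.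
Qed.

Lemma gl_lim x : 0 < x -> is_lim_seq (gl x) (ln (Gamma x)).
Proof.
intros Hx.
destruct (conv_bound (gl x) (x + x^2) 1) as [l Hl]. lia. nra.
{ intros n Hn. apply gl_bound; auto. }
assert (HG : Gamma x = exp l).
{ unfold Gamma.
  rewrite (Lim_seq_ext _ (fun n => exp (gl x n))) by (intros; apply GammaN_exp; auto).
  rewrite (is_lim_seq_unique _ (exp l)). reflexivity.
  apply is_lim_seq_continuous. apply cont_of_derive with (exp l). auto_derive. auto. ring. exact Hl. }
rewrite HG, ln_exp. exact Hl.
Qed.

Lemma sk_int j N : sk (fun i => ln (INR j + 1 + INR i)) N = lf (N + j) - lf j.
Proof.
induction N. simpl. ring.
rewrite sk_S, IHN. replace (S N + j)%nat with (S (N + j)) by lia. rewrite lf_S.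
rewrite S_INR, plus_INR. replace (INR j + 1 + INR N) with (INR N + INR j + 1) by ring. ring.
Qed.

Lemma gl_int j : is_lim_seq (gl (INR j + 1)) (lf j).
Proof.
assert (HQ : forall j, is_lim_seq (fun N => lf N + (INR j + 1) * ln (INR N) - lf (S N + j)) 0).
{ induction j0.
  - apply is_lim_seq_ext with (fun N => - (ln (INR N + 1) - ln (INR N))).
    { intros N. replace (S N + 0)%nat with (S N) by lia. rewrite lf_S, S_INR. simpl INR. ring. }
    replace (Finite 0) with (Rbar_opp 0) by (simpl; f_equal; ring).
    apply -> is_lim_seq_opp. apply ln_shift. lra.
  - apply is_lim_seq_ext with (fun N => (lf N + (INR j0 + 1) * ln (INR N) - lf (S N + j0))
        - (ln (INR N + (INR j0 + 2)) - ln (INR N))).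
    { intros N. replace (S N + S j0)%nat with (S (S N + j0)) by lia. rewrite lf_S.
      rewrite (S_INR (S N + j0)), plus_INR, S_INR, S_INR.
      replace (INR N + 1 + INR j0 + 1) with (INR N + (INR j0 + 2)) by ring. ring. }
    replace (Finite 0) with (Finite (0 - 0)) by (f_equal; ring).
    apply is_lim_seq_minus'. auto. apply ln_shift. pose proof (pos_INR j0). lra. }
apply is_lim_seq_ext with (fun N => (lf N + (INR j + 1) * ln (INR N) - lf (S N + j)) + lf j).
{ intros N. unfold gl. rewrite sk_int. ring. }
replace (Finite (lf j)) with (Finite (0 + lf j)) by (f_equal; ring).
apply is_lim_seq_plus'. auto. apply is_lim_seq_const.
Qed.

Lemma lnGamma_int j : ln (Gamma (INR j + 1)) = lf j.
Proof.
assert (H1 := gl_lim (INR j + 1) ltac:(pose proof (pos_INR j); lra)).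
assert (H2 := gl_int j).
apply is_lim_seq_unique in H1. apply is_lim_seq_unique in H2. rewrite H1 in H2.
apply (f_equal real) in H2. exact H2.
Qed.

Fixpoint LB (z : R) (N : nat) : R :=
  match N with
  | O => 0
  | S M => LB z M + (INR (S M) * ln (1 + z / INR (S M)) - z + z ^ 2 / (2 * INR (S M)))
  end.

Lemma barnes_exp z N : 0 <= z -> barnes_prod z N = exp (LB z N).
Proof.
intros Hz. induction N. simpl. rewrite exp_0. reflexivity.
change (barnes_prod z (S N)) with (barnes_prod z N *
           ((1 + z / INR (S N)) ^ (S N) * exp (- z + z ^ 2 / (2 * INR (S N))))).
change (LB z (S N)) with (LB z N + (INR (S N) * ln (1 + z / INR (S N)) - z + z ^ 2 / (2 * INR (S N)))).
assert (Hm : 0 < INR (S N)) by (apply lt_0_INR; lia).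
assert (Hp : 0 < 1 + z / INR (S N)) by (assert (0 <= z / INR (S N)) by (apply Rdiv_le_0_compat; lra); lra).
rewrite <- (Rpower_pow (S N) _ Hp). unfold Rpower. rewrite IHN.
replace (LB z N + (INR (S N) * ln (1 + z / INR (S N)) - z + z ^ 2 / (2 * INR (S N))))
  with (LB z N + (INR (S N) * ln (1 + z / INR (S N)) + (- z + z ^ 2 / (2 * INR (S N))))) by ring.
rewrite !exp_plus. reflexivity.
Qed.

Lemma LB_diff k N : LB (INR (S k)) N - LB (INR k) N =
  INR N * ln (INR N + INR k + 1) - (lf (N + k) - lf k) - INR N + (INR k + /2) * harmonic N.
Proof.
induction N.
- simpl. ring.
- change (LB (INR (S k)) (S N)) with (LB (INR (S k)) N + (INR (S N) * ln (1 + INR (S k) / INR (S N)) - INR (S k) + INR (S k) ^ 2 / (2 * INR (S N)))).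
  change (LB (INR k) (S N)) with (LB (INR k) N + (INR (S N) * ln (1 + INR k / INR (S N)) - INR k + INR k ^ 2 / (2 * INR (S N)))).
  change (harmonic (S N)) with (harmonic N + / INR (S N)).
  replace (S N + k)%nat with (S (N + k)) by lia. rewrite lf_S.
  assert (Hk : 0 <= INR k) by apply pos_INR. assert (HN : 0 <= INR N) by apply pos_INR.
  rewrite <- (ln_1_plus_div (INR (S N)) (INR (S k))) by (try apply lt_0_INR; try apply pos_INR; lia).
  rewrite <- (ln_1_plus_div (INR (S N)) (INR k)) by (try apply lt_0_INR; try apply pos_INR; lia).
  rewrite (S_INR (N + k)), plus_INR, !S_INR.
  replace (INR N + 1 + (INR k + 1)) with (INR N + 1 + INR k + 1) by ring.
  replace (INR N + 1 + INR k) with (INR N + INR k + 1) by ring.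
  transitivity (LB (INR (S k)) N - LB (INR k) N + ((INR N + 1) * (ln (INR N + INR k + 1 + 1) - ln (INR N + INR k + 1)) - 1 + (2 * INR k + 1) / (2 * (INR N + 1)))).
  { rewrite S_INR. field. lra. }
  rewrite IHN. field. lra.
Qed.

Lemma D_lim k : is_lim_seq (fun N => LB (INR (S k)) N - LB (INR k) N)
  (1 - ln (2 * PI) / 2 + INR k + lf k + (INR k + /2) * euler_gamma).
Proof.
assert (Hk : 0 <= INR k) by apply pos_INR.
apply is_lim_seq_ext with (fun N => INR N * (ln (INR N + INR k + 1) - ln (INR N + INR k)) - Cs (N + k)
   + INR k + lf k + (INR k + /2) * (hh N - (ln (INR N + INR k) - ln (INR N)))).
{ intros N. rewrite LB_diff. unfold Cs, hh. rewrite plus_INR. ring. }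
apply is_lim_seq_plus'. apply is_lim_seq_plus'. apply is_lim_seq_plus'. apply is_lim_seq_minus'.
- apply N_ln. auto.
- apply (is_lim_seq_incr_n Cs k). apply Cs_lim.
- apply is_lim_seq_const.
- apply is_lim_seq_const.
- apply is_lim_seq_mult'. apply is_lim_seq_const.
  assert (H := is_lim_seq_minus' _ _ _ _ (proj1 hh_lim) (ln_shift _ Hk)).
  rewrite Rminus_0_r in H. exact H.
Qed.

Definition betaB k := sk lf k - INR k / 2 * ln (2 * PI) + (INR k + INR k ^ 2 * (1 + euler_gamma)) / 2.

Lemma LB_lim k : is_lim_seq (LB (INR k)) (betaB k).
Proof.
induction k.
- change (INR 0) with 0. apply is_lim_seq_ext with (fun _ => 0).
  { intros N. induction N. reflexivity.
    change (LB 0 (S N)) with (LB 0 N + (INR (S N) * ln (1 + 0 / INR (S N)) - 0 + 0 ^ 2 / (2 * INR (S N)))).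
    rewrite <- IHN. replace (0 / INR (S N)) with 0 by (unfold Rdiv; ring). rewrite Rplus_0_r, ln_1. field.
    pose proof (lt_0_INR (S N) ltac:(lia)). lra. }
  replace (betaB 0) with 0 by (unfold betaB; simpl; field). apply is_lim_seq_const.
- apply is_lim_seq_ext with (fun N => LB (INR k) N + (LB (INR (S k)) N - LB (INR k) N)).
  { intros N. ring. }
  replace (betaB (S k)) with (betaB k + (1 - ln (2 * PI) / 2 + INR k + lf k + (INR k + /2) * euler_gamma)).
  apply is_lim_seq_plus'. auto. apply D_lim.
  unfold betaB. rewrite sk_S, S_INR. field.
Qed.

Lemma lnG_int k : ln (BarnesG (INR k + 1)) = sk lf k.
Proof.
unfold BarnesG. replace (INR k + 1 - 1) with (INR k) by ring.
rewrite (Lim_seq_ext _ (fun N => exp (LB (INR k) N))) by (intros; apply barnes_exp, pos_INR).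
rewrite (is_lim_seq_unique _ (exp (betaB k))).
2:{ apply is_lim_seq_continuous. apply cont_of_derive with (exp (betaB k)). auto_derive. auto. ring. apply LB_lim. }
simpl real. unfold Rpower. rewrite <- !exp_plus, ln_exp. unfold betaB. field.
Qed.

Definition Tii (x : R) (n : nat) : R :=
  let m := S n in
  harmonic m - ln (INR m + x - 1) - euler_gamma + x / INR m - 3 / (2 * INR m).

Definition Vii (x : R) : R := euler_gamma * x + ln (Gamma x) + (1 - euler_gamma - ln (2 * PI)) / 2.

Definition Pp x M := (INR M + x - /2) * harmonic M - INR M - INR M * euler_gamma - sk (fun j => ln (x + INR j)) M.

Lemma psum x N : sum_n (Tii x) N = Pp x (S N).
Proof.
induction N.
- rewrite sum_O. change (Tii x 0 = Pp x 1). unfold Tii, Pp. simpl sk. simpl harmonic. simpl INR.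
  replace (1 + x - 1) with (x + 0) by ring. field.
- rewrite sum_Sn, IHN. change (Pp x (S N) + Tii x (S N) = Pp x (S (S N))). unfold Tii, Pp.
  change (harmonic (S (S N))) with (harmonic (S N) + / INR (S (S N))).
  rewrite (sk_S _ (S N)).
  rewrite (S_INR (S N)).
  replace (INR (S N) + 1 + x - 1) with (x + INR (S N)) by ring.
  assert (0 < INR (S N)) by (apply lt_0_INR; lia). field. lra.
Qed.

Lemma part2 x : 0 < x -> is_series (Tii x) (Vii x).
Proof.
intros Hx.
assert (HP : is_lim_seq (Pp x) (Vii x)).
{ apply is_lim_seq_ext with (fun M => (INR M + (x - /2)) * (hh M - euler_gamma) + (x - /2) * euler_gamma
     + gl x M - Cs M + (ln (INR M + x) - ln (INR M))).
  { intros M. unfold Pp, hh, gl, Cs. rewrite sk_S. replace (x + INR M) with (INR M + x) by ring. field. }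
  replace (Vii x) with (/2 + (x - /2) * euler_gamma + ln (Gamma x) - ln (2 * PI) / 2 + 0)
    by (unfold Vii; field).
  apply is_lim_seq_plus'. apply is_lim_seq_minus'. apply is_lim_seq_plus'. apply is_lim_seq_plus'.
  - apply hh_rate.
  - apply is_lim_seq_const.
  - apply gl_lim; auto.
  - apply Cs_lim.
  - apply ln_shift. lra. }
assert (HS : is_lim_seq (sum_n (Tii x)) (Vii x)).
{ apply is_lim_seq_ext with (fun N => Pp x (S N)). intros; rewrite psum; reflexivity.
  apply -> is_lim_seq_incr_1. exact HP. }
exact HS.
Qed.

Lemma sk_series k : is_series (fun n => sk (fun j => Tii (INR j + 1) n) k) (sk (fun j => Vii (INR j + 1)) k).
Proof.
induction k.
- simpl. assert (H : is_lim_seq (sum_n (fun _ : nat => 0)) 0).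
  { apply is_lim_seq_ext with (fun _ => 0). intros N. rewrite sum_n_const. ring.
    apply is_lim_seq_const. }
  exact H.
- apply (is_series_ext (fun n => plus (sk (fun j => Tii (INR j + 1) n) k) (Tii (INR k + 1) n))).
  { intros n. reflexivity. }
  apply (@is_series_plus R_AbsRing R_NormedModule). auto. apply part2. pose proof (pos_INR k). lra.
Qed.

Lemma sk_T k n : sk (fun j => Tii (INR j + 1) n) k =
  INR k * (harmonic (S n) - euler_gamma) - sk (fun j => ln (INR (S n) + INR j)) k
  + (INR k * (INR k + 1) / 2 - 3 / 2 * INR k) / INR (S n).
Proof.
assert (0 < INR (S n)) by (apply lt_0_INR; lia).
induction k.
- unfold sk. change (INR 0) with 0. field. lra.
- rewrite !sk_S, IHk. unfold Tii.
  replace (INR (S n) + (INR k + 1) - 1) with (INR (S n) + INR k) by ring.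
  rewrite (S_INR k). field; lra.
Qed.

Lemma sk_V k : sk (fun j => Vii (INR j + 1)) k =
  euler_gamma * (INR k * (INR k + 1) / 2) + sk lf k + INR k * (1 - euler_gamma - ln (2 * PI)) / 2.
Proof.
induction k.
- simpl. field.
- rewrite !sk_S, IHk. unfold Vii. rewrite lnGamma_int, S_INR. field.
Qed.

Theorem mainTheorem13 :
  (forall k : nat, (1 <= k)%nat ->
     is_series
       (fun n : nat =>
          let m := S n in
          harmonic m - ln (rising (INR m) k) / INR k - euler_gamma
          + (INR k - 2) / (2 * INR m))
       ((euler_gamma * INR k + 1 - ln (2 * PI)) / 2
        + ln (BarnesG (INR k + 1)) / INR k))
  /\
  (forall x : R, 0 < x ->
     is_series
       (fun n : nat =>
          let m := S n in
          harmonic m - ln (INR m + x - 1) - euler_gamma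
          + x / INR m - 3 / (2 * INR m))
       (euler_gamma * x + ln (Gamma x) + (1 - euler_gamma - ln (2 * PI)) / 2)).
Proof.
split.
- intros k Hk.
  assert (HkR : 0 < INR k) by (apply lt_0_INR; lia).
  assert (H := @is_series_scal R_AbsRing R_NormedModule (/ INR k) _ _ (sk_series k)).
  replace ((euler_gamma * INR k + 1 - ln (2 * PI)) / 2 + ln (BarnesG (INR k + 1)) / INR k)
    with (scal (/ INR k) (sk (fun j => Vii (INR j + 1)) k)).
  2:{ unfold scal; simpl. unfold mult; simpl. rewrite sk_V, lnG_int. field. lra. }
  revert H. apply is_series_ext. intros n. cbv zeta.
  change (scal (/ INR k) ?b) with (/ INR k * b).
  match goal with |- ?a = ?b => change (@eq R a b) end.
  rewrite sk_T.
  assert (0 < INR (S n)) by (apply lt_0_INR; lia).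
  rewrite rising_exp, ln_exp by lra. field; lra.
- intros x Hx. exact (part2 x Hx).
Qed.
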